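(* Let $n\ge1$, let $\Theta$ be a nonzero complex skew-symmetric $n\times n$ matrix, and let $\Gamma$ be a discrete subgroup of $\mathrm{Aut}(\mathcal H,J_\Theta)$. Suppose there is $\phi\in\Gamma$ of the form $\phi(z)=(tz^0+is,\ t^{1/2}Az')$ with $0<t<1$, $s\in\mathbb R$, $A\in U_\Theta$. Then every $\psi\in\Gamma$ is of the form $\psi(z)=(az^0+ib,\ a^{1/2}Bz')$ with $a>0$, $b\in\mathbb R$, $B\in U_\Theta$ (i.e. with $w'=0$ in the normal form below), and $b(1-t)=s(1-a)$; in particular $\frac{b}{1-a}=\frac{s}{1-t}$ whenever $a\neq1$.
   Context: Write points of $\mathbb C^{n+1}$ as $z=(z^0,z')$, $z'=(z^1,\dots,z^n)$. $\mathcal H=\{(z^0,z')\in\mathbb C\times\mathbb C^n:\ \mathrm{Re}\,z^0+\|z'\|^2<0\}$ (Siegel half space). For a complex skew-symmetric $n\times n$ matrix $\Theta=(\Theta_{\alpha\beta})$, $J_\Theta$ is the almost complex structure on $\mathbb C^{n+1}$ $J_\Theta=i\frac{\partial}{\partial z^0}\otimes dz^0+\sum_\alpha\big(i\frac{\partial}{\partial z^\alpha}+2\sum_\beta\Theta_{\alpha\beta}z^\beta\frac{\partial}{\partial \bar z^0}\big)\otimes dz^\alpha-i\frac{\partial}{\partial \bar z^0}\otimes d\bar z^0+\sum_\alpha\big(-i\frac{\partial}{\partial \bar z^\alpha}+2\sum_\beta\overline{\Theta_{\alpha\beta}}\bar z^\beta\frac{\partial}{\partial z^0}\big)\otimes d\bar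 z^\alpha$ (integrable iff $\Theta=0$). $\mathrm{Aut}(\mathcal H,J_\Theta)$ is the group of $J_\Theta$-holomorphic diffeomorphisms of $\mathcal H$ with compact-open topology. $U_\Theta=\{A\in\mathbb C^{n\times n}: A^t\bar A=I,\ A^t\Theta A=\Theta\}$, a compact group. For $w'\in\mathbb C^n$, $h_{w'}(z')=-\|w'\|^2-2\langle z',\bar w'\rangle+i\big(\sum\Theta_{\alpha\beta}z^\alpha w^\beta+\sum\overline{\Theta_{\alpha\beta}}\,\bar z^\alpha\bar w^\beta\big)$, where $\langle z',\bar w'\rangle=\sum_\alpha z^\alpha\bar w^\alpha$. It is known (and may be assumed) that for $\Theta\neq0$ every $\phi\in\mathrm{Aut}(\mathcal H,J_\Theta)$ can be written uniquely as $\phi(z)=(tz^0+h_{w'}(z')+is,\ t^{1/2}Az'+w')$ with $t>0$, $s\in\mathbb R$, $w'\in\mathbb C^n$, $A\in U_\Theta$, and every such map is an automorphism. *)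

(* Defs.v *)
From Stdlib Require Import Reals.
From mathcomp Require Import all_boot.

Set Implicit Arguments.
Unset Strict Implicit.

Local Open Scope R_scope.

Record C := mkC { Cre : R ; Cim : R }.

Definition C0 : C := mkC 0 0.
Definition RtoC (x : R) : C := mkC x 0.
Definition Ci : C := mkC 0 1.
Definition Cplus (z w : C) : C := mkC (Cre z + Cre w) (Cim z + Cim w).
Definition Copp (z : C) : C := mkC (- Cre z) (- Cim z).
Definition Cminus (z w : C) : C := Cplus z (Copp w).
Definition Cmult (z w : C) : C :=
  mkC (Cre z * Cre w - Cim z * Cim w) (Cre z * Cim w + Cim z * Cre w).
Definition Cconj (z : C) : C := mkC (Cre z) (- Cim z).
Definition Cnorm2 (z : C) : R := Cre z * Cre z + Cim z * Cim z.

Definition Rsum (n : nat) (F : 'I_n -> R) : R := \big[Rplus/0]_(i < n) F i.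
Definition Csum (n : nat) (F : 'I_n -> C) : C := \big[Cplus/C0]_(i < n) F i.

Definition Vec (n : nat) := 'I_n -> C.
Definition Pt (n : nat) := (C * Vec n)%type.

Definition eqPt (n : nat) (p q : Pt n) : Prop :=
  fst p = fst q /\ forall i : 'I_n, snd p i = snd q i.

Definition dist2 (n : nat) (p q : Pt n) : R :=
  Cnorm2 (Cminus (fst p) (fst q)) + Rsum (fun i => Cnorm2 (Cminus (snd p i) (snd q i))).

Definition inH (n : nat) (z : Pt n) : Prop :=
  Cre (fst z) + Rsum (fun i => Cnorm2 (snd z i)) < 0.

Definition Mat (n : nat) := 'I_n -> 'I_n -> C.

Definition skew (n : nat) (Th : Mat n) : Prop :=
  forall a b : 'I_n, Th a b = Copp (Th b a).

Definition nonzero_mat (n : nat) (Th : Mat n) : Prop :=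
  exists a b : 'I_n, Th a b <> C0.

Definition kron (n : nat) (a b : 'I_n) : C := if a == b then RtoC 1 else C0.

Definition inU (n : nat) (Th : Mat n) (A : Mat n) : Prop :=
  (forall a b : 'I_n, Csum (fun k => Cmult (A k a) (Cconj (A k b))) = kron a b) /\
  (forall a b : 'I_n,
     Csum (fun k => Csum (fun l => Cmult (Cmult (A k a) (Th k l)) (A l b))) = Th a b).

Definition hw (n : nat) (Th : Mat n) (w z : Vec n) : C :=
  Cplus (Cplus (RtoC (- Rsum (fun a => Cnorm2 (w a))))
               (Cmult (RtoC (-2)) (Csum (fun a => Cmult (z a) (Cconj (w a))))))
        (Cmult Ci
           (Cplus (Csum (fun a => Csum (fun b => Cmult (Cmult (Th a b) (z a)) (w b))))
                  (Csum (fun a => Csum (fun b =>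
                       Cmult (Cmult (Cconj (Th a b)) (Cconj (z a))) (Cconj (w b))))))).

Definition nf (n : nat) (Th : Mat n) (t s : R) (w : Vec n) (A : Mat n)
  (z : Pt n) : Pt n :=
  (Cplus (Cplus (Cmult (RtoC t) (fst z)) (hw Th w (snd z))) (Cmult Ci (RtoC s)),
   fun a => Cplus (Cmult (RtoC (sqrt t)) (Csum (fun b => Cmult (A a b) (snd z b)))) (w a)).

Definition zeroVec (n : nat) : Vec n := fun _ => C0.
Arguments zeroVec n : clear implicits.

(* Maps are modelled as functions Pt n -> Pt n; only their values on H matter. *)
Definition agreeOnH (n : nat) (f g : Pt n -> Pt n) : Prop :=
  forall z, inH z -> eqPt (f z) (g z).

(* membership in Aut(H, J_Theta), via the (assumed) normal form *)
Definition isAut (n : nat) (Th : Mat n) (f : Pt n -> Pt n) : Prop :=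
  exists (t s : R) (w : Vec n) (A : Mat n),
    0 < t /\ inU Th A /\ agreeOnH f (nf Th t s w A).

Definition isSubgroup (n : nat) (Th : Mat n) (G : (Pt n -> Pt n) -> Prop) : Prop :=
  (forall f, G f -> isAut Th f) /\
  (exists e, G e /\ agreeOnH e (fun z => z)) /\
  (forall f g, G f -> G g -> exists h, G h /\ agreeOnH h (fun z => f (g z))) /\
  (forall f, G f -> exists h, G h /\ agreeOnH (fun z => h (f z)) (fun z => z)
                               /\ agreeOnH (fun z => f (h z)) (fun z => z)).

(* sequential compactness of K in C^{n+1} (= compactness, metric space) *)
Definition compactPt (n : nat) (K : Pt n -> Prop) : Prop :=
  forall u : nat -> Pt n, (forall k, K (u k)) ->
    exists (phi : nat -> nat) (p : Pt n),
      (forall k, (phi k < phi (S k))%nat) /\ K p /\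
      (forall eps, 0 < eps -> exists N : nat, forall k, (N <= k)%nat ->
          dist2 (u (phi k)) p < eps).

(* discreteness in the compact-open topology (= topology of uniform
   convergence on compact subsets of H, the target being metric):
   every element of G has a basic neighbourhood
   { g : sup_{z in K} |g z - f z| < eps } meeting G only in f. *)
Definition isDiscrete (n : nat) (G : (Pt n -> Pt n) -> Prop) : Prop :=
  forall f, G f ->
    exists (K : Pt n -> Prop) (eps : R),
      compactPt K /\ (forall z, K z -> inH z) /\ 0 < eps /\
      forall g, G g -> (forall z, K z -> dist2 (g z) (f z) < eps * eps) ->
        agreeOnH g f.

(* Main.v *)
Require Import Defs.
From Stdlib Require Import Reals.
From mathcomp Require Import all_boot.
Local Open Scope R_scope.

From Stdlib Require Import Lra Lia ZArith FunctionalExtensionality Classical IndefiniteDescription.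
From HB Require Import structures.
From mathcomp Require Import all_boot.
Import Defs.
Set Warnings "-notation-overridden,-redundant-canonical-projection".
Set Implicit Arguments.
Unset Strict Implicit.

Lemma Ceq (z w : C) : Cre z = Cre w -> Cim z = Cim w -> z = w.
Proof. destruct z, w; simpl; intros -> ->; reflexivity. Qed.

Ltac ceq := apply Ceq; unfold Cplus, Cmult, Copp, Cminus, Cconj, RtoC, Ci, C0; simpl; ring.

Lemma CplusA' : associative Cplus. Proof. intros x y z; ceq. Qed.
Lemma CplusC' : commutative Cplus. Proof. intros x y; ceq. Qed.
Lemma Cplus0l' : left_id C0 Cplus. Proof. intros x; ceq. Qed.
HB.instance Definition _ := Monoid.isComLaw.Build C C0 Cplus CplusA' CplusC' Cplus0l'.

Lemma RplusA' : associative Rplus. Proof. intros x y z; ring. Qed.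
Lemma RplusC' : commutative Rplus. Proof. intros x y; ring. Qed.
Lemma Rplus0l' : left_id 0 Rplus. Proof. intros x; ring. Qed.
HB.instance Definition _ := Monoid.isComLaw.Build R 0 Rplus RplusA' RplusC' Rplus0l'.

Lemma Cre_sum n (F : 'I_n -> C) : Cre (Csum F) = Rsum (fun i => Cre (F i)).
Proof. unfold Csum, Rsum. apply: (big_morph Cre) => //. Qed.
Lemma Cim_sum n (F : 'I_n -> C) : Cim (Csum F) = Rsum (fun i => Cim (F i)).
Proof. unfold Csum, Rsum. apply: (big_morph Cim) => //. Qed.
Lemma Rsum_opp n (F : 'I_n -> R) : Rsum (fun i => - F i) = - Rsum F.
Proof. unfold Rsum. symmetry. apply: (big_morph Ropp). intros x y; ring. ring. Qed.
Lemma Rsum_scal n c (F : 'I_n -> R) : Rsum (fun i => c * F i) = c * Rsum F.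
Proof. unfold Rsum. symmetry. apply: (big_morph (fun x => c * x)). intros x y; ring. ring. Qed.
Lemma Rsum_add n (F G : 'I_n -> R) : Rsum (fun i => F i + G i) = Rsum F + Rsum G.
Proof. unfold Rsum. by rewrite big_split. Qed.
Lemma Rsum_ext n (F G : 'I_n -> R) : (forall i, F i = G i) -> Rsum F = Rsum G.
Proof. intros H; unfold Rsum; apply eq_bigr => i _; auto. Qed.
Lemma Csum_ext n (F G : 'I_n -> C) : (forall i, F i = G i) -> Csum F = Csum G.
Proof. intros H; unfold Csum; apply eq_bigr => i _; auto. Qed.
Lemma Rsum_zero n : Rsum (fun _ : 'I_n => 0) = 0.
Proof. unfold Rsum. by rewrite big1. Qed.
Lemma Csum_zero n : Csum (fun _ : 'I_n => C0) = C0.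
Proof. unfold Csum. by rewrite big1. Qed.
Lemma Rsum_ge0 n (F : 'I_n -> R) : (forall i, 0 <= F i) -> 0 <= Rsum F.
Proof. intros H; unfold Rsum. apply: (big_ind (fun x => 0 <= x)) => //; [lra| intros; lra]. Qed.
Lemma Rsum_le n (F G : 'I_n -> R) : (forall i, F i <= G i) -> Rsum F <= Rsum G.
Proof. intros H; unfold Rsum. apply: (big_ind2 (fun x y => x <= y)) => //; [lra| intros; lra]. Qed.
Lemma Rsum_term n (F : 'I_n -> R) i : (forall j, 0 <= F j) -> F i <= Rsum F.
Proof.
  intros H; unfold Rsum. rewrite (bigD1 i) //=.
  rewrite -{1}(Rplus_0_r (F i)); apply Rplus_le_compat_l.
  apply: (big_ind (fun x => 0 <= x)) => //; [lra| intros; lra].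
Qed.
Lemma Rsum_const n c : Rsum (fun _ : 'I_n => c) = INR n * c.
Proof.
  unfold Rsum. elim: n => [|n IH]. rewrite big_ord0 /=; ring.
  rewrite big_ord_recr IH (S_INR n) /=. ring.
Qed.
Lemma Cnorm2_ge0 z : 0 <= Cnorm2 z.
Proof. unfold Cnorm2; nra. Qed.
Lemma Csum_split n (F G : 'I_n -> C) : Csum (fun i => Cplus (F i) (G i)) = Cplus (Csum F) (Csum G).
Proof. unfold Csum. by rewrite big_split. Qed.
Lemma Csum_opp n (F : 'I_n -> C) : Csum (fun i => Copp (F i)) = Copp (Csum F).
Proof. unfold Csum. symmetry. apply: (big_morph Copp). intros x y; ceq. ceq. Qed.
Lemma Csum_sub n (F G : 'I_n -> C) : Csum (fun i => Cminus (F i) (G i)) = Cminus (Csum F) (Csum G).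
Proof. unfold Cminus. rewrite Csum_split Csum_opp //. Qed.
Lemma Csum_mulr n (F : 'I_n -> C) y : Csum (fun i => Cmult (F i) y) = Cmult (Csum F) y.
Proof. unfold Csum. symmetry. apply: (big_morph (fun x => Cmult x y)). intros a b; ceq. ceq. Qed.
Lemma Csum_mull n (F : 'I_n -> C) y : Csum (fun i => Cmult y (F i)) = Cmult y (Csum F).
Proof. unfold Csum. symmetry. apply: (big_morph (fun x => Cmult y x)). intros a b; ceq. ceq. Qed.
Lemma Csum_conj n (F : 'I_n -> C) : Csum (fun i => Cconj (F i)) = Cconj (Csum F).
Proof. unfold Csum. symmetry. apply: (big_morph Cconj). intros a b; ceq. ceq. Qed.
Lemma Csum_exch n (F : 'I_n -> 'I_n -> C) : Csum (fun i => Csum (fun j => F i j)) = Csum (fun j => Csum (fun i => F i j)).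
Proof. unfold Csum. by rewrite exchange_big. Qed.
Lemma Csum_kron n (F : 'I_n -> C) b : Csum (fun c => Cmult (F c) (kron b c)) = F b.
Proof.
  unfold Csum. rewrite (bigD1 b) //= big1.
  - unfold kron; rewrite eqxx; ceq.
  - move=> c /= Hc. unfold kron. rewrite eq_sym (negbTE Hc). ceq.
Qed.
Lemma Csum_eq0 n (F : 'I_n -> C) : (forall i, F i = C0) -> Csum F = C0.
Proof. intros H. unfold Csum. by rewrite big1. Qed.
Lemma Rsum_eq0 n (F : 'I_n -> R) : (forall i, F i = 0) -> Rsum F = 0.
Proof. intros H. unfold Rsum. by rewrite big1. Qed.


Definition N2 n (x : Vec n) := Rsum (fun a => Cnorm2 (x a)).
Definition ip n (x y : Vec n) := Rsum (fun a => Cre (x a) * Cre (y a) + Cim (x a) * Cim (y a)).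
Definition Mv n (R : Mat n) (x : Vec n) : Vec n := fun a => Csum (fun b => Cmult (R a b) (x b)).
Definition vsub n (x y : Vec n) : Vec n := fun a => Cminus (x a) (y a).
Definition vsc n (c : R) (x : Vec n) : Vec n := fun a => Cmult (RtoC c) (x a).

Lemma hw_re n (Th : Mat n) w z : Cre (hw Th w z) = - N2 w - 2 * ip z w.
Proof.
  unfold hw, N2, ip. cbn [Cre Cplus Cmult RtoC Ci Cim].
  rewrite !Cre_sum !Cim_sum.
  have E : Rsum (fun i => Cim (Csum (fun b => Cmult (Cmult (Cconj (Th i b)) (Cconj (z i))) (Cconj (w b)))))
         = - Rsum (fun i => Cim (Csum (fun b => Cmult (Cmult (Th i b) (z i)) (w b)))).
  { rewrite -Rsum_opp. apply Rsum_ext => i. rewrite !Cim_sum -Rsum_opp. apply Rsum_ext => j.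
    unfold Cmult, Cconj; simpl; ring. }
  rewrite E.
  have E2 : Rsum (fun i => Cre (Cmult (z i) (Cconj (w i)))) = Rsum (fun a => Cre (z a) * Cre (w a) + Cim (z a) * Cim (w a)).
  { apply Rsum_ext => i. unfold Cmult, Cconj; simpl; ring. }
  rewrite E2. ring.
Qed.

Lemma hw_zero n (Th : Mat n) z : hw Th (zeroVec n) z = C0.
Proof.
  unfold hw, zeroVec.
  have E1 : Rsum (fun a : 'I_n => Cnorm2 C0) = 0.
  { apply Rsum_eq0 => i. unfold Cnorm2, C0; simpl; ring. }
  have E2 : Csum (fun a : 'I_n => Cmult (z a) (Cconj C0)) = C0.
  { apply Csum_eq0 => i. ceq. }
  have E3 : Csum (fun a : 'I_n => Csum (fun b : 'I_n => Cmult (Cmult (Th a b) (z a)) C0)) = C0.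
  { apply Csum_eq0 => i. apply Csum_eq0 => j. ceq. }
  have E4 : Csum (fun a : 'I_n => Csum (fun b : 'I_n => Cmult (Cmult (Cconj (Th a b)) (Cconj (z a))) (Cconj C0))) = C0.
  { apply Csum_eq0 => i. apply Csum_eq0 => j. ceq. }
  rewrite E1 E2 E3 E4. ceq.
Qed.

Lemma norm_pres n (Th : Mat n) (R : Mat n) x : inU Th R -> N2 (Mv R x) = N2 x.
Proof.
  move=> [HU _].
  have E : Csum (fun a => Cmult (Mv R x a) (Cconj (Mv R x a))) = Csum (fun b => Cmult (x b) (Cconj (x b))).
  { transitivity (Csum (fun a => Csum (fun b => Csum (fun c =>
        Cmult (Cmult (R a b) (Cconj (R a c))) (Cmult (x b) (Cconj (x c))))))).
    { apply Csum_ext => a. unfold Mv. rewrite -Csum_conj -Csum_mulr. apply Csum_ext => b.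
      rewrite -Csum_mull. apply Csum_ext => c. ceq. }
    rewrite Csum_exch. apply Csum_ext => b. rewrite Csum_exch.
    transitivity (Csum (fun c => Cmult (Cmult (x b) (Cconj (x c))) (kron b c))).
    { apply Csum_ext => c. rewrite Csum_mulr HU. ceq. }
    by rewrite Csum_kron. }
  unfold N2. have := f_equal Cre E. rewrite !Cre_sum => E'.
  transitivity (Rsum (fun a => Cre (Cmult (Mv R x a) (Cconj (Mv R x a))))).
  { apply Rsum_ext => a. unfold Cnorm2, Cmult, Cconj; simpl; ring. }
  rewrite E'. apply Rsum_ext => a. unfold Cnorm2, Cmult, Cconj; simpl; ring.
Qed.

Lemma Mv_sub n (R : Mat n) x y : Mv R (vsub x y) = vsub (Mv R x) (Mv R y).
Proof.
  apply functional_extensionality => a. unfold Mv, vsub. rewrite -Csum_sub.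
  apply Csum_ext => b. ceq.
Qed.
Lemma Mv_sc n (R : Mat n) c x : Mv R (vsc c x) = vsc c (Mv R x).
Proof.
  apply functional_extensionality => a. unfold Mv, vsc. rewrite -Csum_mull.
  apply Csum_ext => b. ceq.
Qed.
Lemma N2_sc n c (x : Vec n) : N2 (vsc c x) = c * c * N2 x.
Proof. unfold N2, vsc. rewrite -Rsum_scal. apply Rsum_ext => a. unfold Cnorm2, Cmult, RtoC; simpl; ring. Qed.
Lemma N2_ge0 n (x : Vec n) : 0 <= N2 x.
Proof. apply Rsum_ge0 => i; apply Cnorm2_ge0. Qed.
Lemma N2_tri n (x y z : Vec n) : N2 (vsub x z) <= 2 * N2 (vsub x y) + 2 * N2 (vsub y z).
Proof.
  unfold N2. rewrite -!Rsum_scal -Rsum_add. apply Rsum_le => a.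
  unfold vsub, Cnorm2, Cminus, Cplus, Copp; simpl.
  have := Rle_0_sqr (Cre (x a) - 2*Cre (y a) + Cre (z a)).
  have := Rle_0_sqr (Cim (x a) - 2*Cim (y a) + Cim (z a)). unfold Rsqr. nra.
Qed.
Lemma N2_subC n (x y : Vec n) : N2 (vsub x y) = N2 (vsub y x).
Proof. unfold N2. apply Rsum_ext => a. unfold vsub, Cnorm2, Cminus, Cplus, Copp; simpl. ring. Qed.
Lemma ip_self n (x : Vec n) : ip x x = N2 x.
Proof. unfold ip, N2. apply Rsum_ext => a. unfold Cnorm2; ring. Qed.
Lemma ip_sym n (x y : Vec n) : ip x y = ip y x.
Proof. unfold ip. apply Rsum_ext => a. ring. Qed.
Lemma ip_zero n (x : Vec n) : ip (zeroVec n) x = 0.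
Proof. unfold ip. apply Rsum_eq0 => a. unfold zeroVec, C0; simpl; ring. Qed.
Lemma N2_zero_inv n (x : Vec n) : N2 x = 0 -> x = zeroVec n.
Proof.
  move=> H. apply functional_extensionality => a.
  have H1 := @Rsum_term n (fun a => Cnorm2 (x a)) a (fun j => Cnorm2_ge0 _).
  fold (N2 x) in H1. rewrite H in H1.
  have := Cnorm2_ge0 (x a). unfold Cnorm2 in *. move=> H2.
  apply Ceq; unfold zeroVec, C0; simpl; nra.
Qed.


Definition Aff n (al be : R) (T : Vec n -> Vec n) (z : Pt n) : Pt n :=
  (Cplus (Cmult (RtoC al) (fst z)) (Cmult Ci (RtoC be)), T (snd z)).
Definition Tof n (al : R) (R : Mat n) (x : Vec n) : Vec n := vsc (sqrt al) (Mv R x).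
Definition GoodP n (Th : Mat n) (al : R) (T : Vec n -> Vec n) : Prop :=
  0 < al /\ exists R, inU Th R /\ forall x, T x = Tof al R x.
Definition Rep n (f : Pt n -> Pt n) al be T : Prop := forall z, inH z -> f z = Aff al be T z.
Definition rho n (z : Pt n) := Cre (fst z) + N2 (snd z).

Lemma eqPt_eq n (p q : Pt n) : eqPt p q -> p = q.
Proof.
  destruct p as [p0 p1], q as [q0 q1]; unfold eqPt; simpl. move=> [-> H].
  f_equal. by apply functional_extensionality.
Qed.

Lemma nf_zero n (Th : Mat n) al be R z : nf Th al be (zeroVec n) R z = Aff al be (Tof al R) z.
Proof.
  unfold nf, Aff. f_equal.
  - rewrite hw_zero. ceq.
  - apply functional_extensionality => a. unfold Tof, vsc, Mv, zeroVec. ceq.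
Qed.

Lemma N2_Tof n (Th : Mat n) al R x : 0 <= al -> inU Th R -> N2 (Tof al R x) = al * N2 x.
Proof.
  move=> Ha HU. unfold Tof. rewrite N2_sc (norm_pres x HU).
  rewrite sqrt_sqrt //.
Qed.

Lemma Aff_H n (Th : Mat n) al be T z : GoodP Th al T -> inH z -> inH (Aff al be T z).
Proof.
  move=> [Ha [R [HU HT]]] Hz. unfold inH in *. simpl.
  rewrite HT. change (Rsum (fun i => Cnorm2 (Tof al R (snd z) i))) with (N2 (Tof al R (snd z))).
  rewrite (N2_Tof _ (Rlt_le _ _ Ha) HU). unfold N2.
  have : al * (Cre (fst z) + Rsum (fun i => Cnorm2 (snd z i))) < 0.
  { nra. }
  lra.
Qed.

Lemma Aff_comp n al1 be1 (T1 : Vec n -> Vec n) al2 be2 T2 z :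
  Aff al1 be1 T1 (Aff al2 be2 T2 z) = Aff (al1 * al2) (al1 * be2 + be1) (fun x => T1 (T2 x)) z.
Proof. unfold Aff; simpl. f_equal. ceq. Qed.

Lemma Aff_Text n al be (T T' : Vec n -> Vec n) z : (forall x, T x = T' x) -> Aff al be T z = Aff al be T' z.
Proof. move=> H. unfold Aff. by rewrite H. Qed.

Lemma Rep_Text n (f : Pt n -> Pt n) al be T T' : Rep f al be T -> (forall x, T x = T' x) -> Rep f al be T'.
Proof. move=> H E z Hz. rewrite H //. by apply Aff_Text. Qed.

Lemma inH_pt n x0 (x : Vec n) : x0 + N2 x < 0 -> inH (RtoC x0, x).
Proof. unfold inH; simpl. done. Qed.

Lemma Aff_ident n al be (T : Vec n -> Vec n) al' be' T' :
  (forall z, inH z -> Aff al be T z = Aff al' be' T' z) ->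
  al = al' /\ be = be' /\ forall x, T x = T' x.
Proof.
  move=> H.
  have key : forall x, al = al' /\ be = be' /\ T x = T' x.
  { move=> x. set X := - N2 x - 1.
    have H1 := H (RtoC X, x) (inH_pt (x:=x) (ltac:(unfold X; lra) : X + N2 x < 0)).
    have H2 := H (RtoC (X - 1), x) (inH_pt (x:=x) (ltac:(unfold X; lra) : X - 1 + N2 x < 0)).
    have A1 := f_equal (fun p => Cre (fst p)) H1. have A2 := f_equal (fun p => Cre (fst p)) H2.
    have B1 := f_equal (fun p => Cim (fst p)) H1. have C1 := f_equal snd H1.
    unfold Aff in A1, A2, B1, C1; simpl in A1, A2, B1, C1.
    split; [nra| split; [nra| exact C1]]. }
  have [-> [-> _]] := key (zeroVec n). split; [done| split; [done|]]. move=> x. by have [_ [_ ->]] := key x.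
Qed.

Lemma nf_re n (Th : Mat n) al be w R x0 (z' : Vec n) :
  Cre (fst (nf Th al be w R (RtoC x0, z'))) = al * x0 - N2 w - 2 * ip z' w.
Proof. unfold nf. cbn [fst snd Cre Cplus Cmult RtoC Ci]. rewrite hw_re; cbn [Cim RtoC Ci]. ring. Qed.

Lemma rho_nf_shift n (Th : Mat n) al be w R x0 (z' : Vec n) :
  rho (nf Th al be w R (RtoC x0, z')) = al * x0 + rho (nf Th al be w R (RtoC 0, z')).
Proof. unfold rho, nf. cbn [fst snd]. simpl. ring. Qed.

Lemma admissible n (Th : Mat n) al be w R (z' : Vec n) : 0 < al ->
  exists X, forall x0, x0 <= X -> inH (RtoC x0, z') /\ inH (nf Th al be w R (RtoC x0, z')).
Proof.
  move=> Ha. set c := rho (nf Th al be w R (RtoC 0, z')).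
  exists (- ((Rabs c + 1) / al) - N2 z' - 1). move=> x0 Hx. split.
  - apply inH_pt. have := Rabs_pos c. have : 0 < (Rabs c + 1) / al.
    { apply Rdiv_lt_0_compat; [have := Rabs_pos c; lra | lra]. } lra.
  - change (rho (nf Th al be w R (RtoC x0, z')) < 0). rewrite rho_nf_shift. fold c.
    have E : al * ((Rabs c + 1) / al) = Rabs c + 1 by field; lra.
    have := N2_ge0 z'. have := Rle_abs c.
    have : al * x0 <= al * (- ((Rabs c + 1) / al) - N2 z' - 1) by apply Rmult_le_compat_l; lra.
    move=> H1 H2 H3. have : al * (- ((Rabs c + 1) / al) - N2 z' - 1) = - (Rabs c + 1) - al * (N2 z' + 1) by field; lra.
    nra.
Qed.


Lemma Aff_re n al be (T : Vec n -> Vec n) y : Cre (fst (Aff al be T y)) = al * Cre (fst y).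
Proof. unfold Aff; simpl; ring. Qed.
Lemma Aff_id n (z : Pt n) : Aff 1 0 (fun x => x) z = z.
Proof. destruct z as [z0 z1]. unfold Aff; simpl. f_equal. ceq. Qed.

Lemma w0 n (Th : Mat n) (G : (Pt n -> Pt n) -> Prop) phi t s A
  (HG : isSubgroup Th G) (Hphi : G phi) (Ht : 0 < t < 1)
  (Hphinf : agreeOnH phi (nf Th t s (zeroVec n) A)) :
  forall f, G f -> exists al be R, 0 < al /\ inU Th R /\ agreeOnH f (nf Th al be (zeroVec n) R).
Proof.
  move=> f Hf. have [HGa [_ [HGc _]]] := HG.
  have [a [b [w [B [Ha [HB Hfnf]]]]]] := HGa f Hf.
  have [h [Hh Hhc]] := HGc phi f Hphi Hf.
  have [th [sh [wh [Ah [Hth [HAh Hhnf]]]]]] := HGa h Hh.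
  have key : forall z', - N2 wh - 2 * ip z' wh = t * (- N2 w - 2 * ip z' w).
  { move=> z'. have [X HX] := admissible Th b w B z' Ha.
    have E : forall x0, x0 <= X -> th * x0 - N2 wh - 2 * ip z' wh = t * (a * x0 - N2 w - 2 * ip z' w).
    { move=> x0 Hx0. have [Hz Hfz] := HX x0 Hx0.
      have E1 := eqPt_eq (Hhnf _ Hz). have E2 := eqPt_eq (Hhc _ Hz).
      have E3 := eqPt_eq (Hfnf _ Hz). rewrite E3 in E2.
      have E4 := eqPt_eq (Hphinf _ Hfz). rewrite E4 nf_zero in E2. rewrite E2 in E1.
      have := f_equal (fun p => Cre (fst p)) E1. cbv beta. rewrite Aff_re !nf_re. lra. }
    have E5 := E X (Rle_refl _). have E6 := E (X - 1) ltac:(lra). nra. }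
  have K0 := key (zeroVec n). have K1 := key wh. have K2 := key w.
  rewrite !ip_zero in K0. rewrite ip_self in K1. rewrite ip_self (ip_sym w wh) in K2.
  have HQ : N2 w = 0.
  { have Ht0 : t <> 0 by lra.
    have P1 : N2 wh = t * N2 w by lra.
    rewrite P1 in K1 K2.
    have I1 : ip wh w = N2 w.
    { apply (Rmult_eq_reg_l t); [|done]. lra. }
    have I2 : ip wh w = t * N2 w by lra.
    have : (1 - t) * N2 w = 0 by nra.
    move/Rmult_integral => [|]; [lra|done]. }
  have Hw := N2_zero_inv HQ. subst w.
  exists a, b, B. done.
Qed.

Lemma GRep n (Th : Mat n) (G : (Pt n -> Pt n) -> Prop) phi t s A
  (HG : isSubgroup Th G) (Hphi : G phi) (Ht : 0 < t < 1)
  (Hphinf : agreeOnH phi (nf Th t s (zeroVec n) A)) :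
  forall f, G f -> exists al be T, GoodP Th al T /\ Rep f al be T.
Proof.
  move=> f Hf. have [al [be [R [Ha [HR Hnf]]]]] := w0 HG Hphi Ht Hphinf Hf.
  exists al, be, (Tof al R). split. split; [done| exists R; done].
  move=> z Hz. rewrite -(nf_zero Th). exact: eqPt_eq (Hnf z Hz).
Qed.

Lemma comp_rep n (Th : Mat n) (G : (Pt n -> Pt n) -> Prop) phi t s A
  (HG : isSubgroup Th G) (Hphi : G phi) (Ht : 0 < t < 1)
  (Hphinf : agreeOnH phi (nf Th t s (zeroVec n) A))
  f a1 b1 T1 g a2 b2 T2 :
  G f -> Rep f a1 b1 T1 -> GoodP Th a1 T1 -> G g -> Rep g a2 b2 T2 -> GoodP Th a2 T2 ->
  exists h, G h /\ Rep h (a1 * a2) (a1 * b2 + b1) (fun x => T1 (T2 x)) /\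
            GoodP Th (a1 * a2) (fun x => T1 (T2 x)).
Proof.
  move=> Hf Rf Gf Hg Rg Gg. have [_ [_ [HGc _]]] := HG.
  have [h [Hh Hhc]] := HGc f g Hf Hg.
  have Rh : Rep h (a1 * a2) (a1 * b2 + b1) (fun x => T1 (T2 x)).
  { move=> z Hz. rewrite (eqPt_eq (Hhc z Hz)) Rg // Rf. by rewrite Aff_comp. exact: Aff_H Gg Hz. }
  exists h. split; [done| split; [done|]].
  have [al [be [T [[Hal [R [HR HT]]] Rh']]]] := GRep HG Hphi Ht Hphinf Hh.
  have [E1 [_ E3]] : al = a1 * a2 /\ be = a1 * b2 + b1 /\ forall x, T x = T1 (T2 x).
  { apply Aff_ident => z Hz. by rewrite -Rh' // -Rh. }
  subst al. split; [done| exists R; split; [done|]]. move=> x. by rewrite -E3.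
Qed.

Lemma inv_rep n (Th : Mat n) (G : (Pt n -> Pt n) -> Prop) phi t s A
  (HG : isSubgroup Th G) (Hphi : G phi) (Ht : 0 < t < 1)
  (Hphinf : agreeOnH phi (nf Th t s (zeroVec n) A))
  f a b T :
  G f -> Rep f a b T -> GoodP Th a T ->
  exists g T', G g /\ Rep g (/ a) (- b / a) T' /\ GoodP Th (/ a) T' /\
     (forall x, T (T' x) = x) /\ (forall x, T' (T x) = x).
Proof.
  move=> Hf Rf Gf. have [_ [_ [_ HGi]]] := HG.
  have [g [Hg [Hgf Hfg]]] := HGi f Hf.
  have [a' [b' [T' [Gg Rg]]]] := GRep HG Hphi Ht Hphinf Hg.
  have [E1 [E2 E3]] : a * a' = 1 /\ a * b' + b = 0 /\ forall x, T (T' x) = x.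
  { apply Aff_ident => z Hz. rewrite Aff_id -Aff_comp -Rf; last exact: Aff_H Gg Hz.
    rewrite -Rg //. by rewrite (eqPt_eq (Hfg z Hz)). }
  have [_ [_ E4]] : a' * a = 1 /\ a' * b + b' = 0 /\ forall x, T' (T x) = x.
  { apply Aff_ident => z Hz. rewrite Aff_id -Aff_comp -Rg; last exact: Aff_H Gf Hz.
    rewrite -Rf //. by rewrite (eqPt_eq (Hgf z Hz)). }
  have Ha : 0 < a by case: Gf.
  have Ea' : a' = / a. { apply (Rmult_eq_reg_l a); [|lra]. rewrite E1 Rinv_r //; lra. }
  have Eb' : b' = - b / a. { apply (Rmult_eq_reg_l a); [|lra]. field_simplify; lra. }
  exists g, T'. rewrite -Ea' -Eb'. done.
Qed.

Lemma id_rep n (Th : Mat n) (G : (Pt n -> Pt n) -> Prop) phi t s A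
  (HG : isSubgroup Th G) (Hphi : G phi) (Ht : 0 < t < 1)
  (Hphinf : agreeOnH phi (nf Th t s (zeroVec n) A)) e :
  G e -> agreeOnH e (fun z => z) -> Rep e 1 0 (fun x => x) /\ GoodP Th 1 (fun x => x).
Proof.
  move=> He Hid. have [al [be [T [Ge Re]]]] := GRep HG Hphi Ht Hphinf He.
  have [E1 [E2 E3]] : al = 1 /\ be = 0 /\ forall x, T x = x.
  { apply Aff_ident => z Hz. by rewrite Aff_id -(Re z Hz) (eqPt_eq (Hid z Hz)). }
  subst al be. split.
  - move=> z Hz. by rewrite (eqPt_eq (Hid z Hz)) Aff_id.
  - case: Ge => H0 [R [HR HT]]. split; [done| exists R; split; [done|]]. move=> x. by rewrite -HT E3.
Qed.


Lemma vsub_sc n c (x y : Vec n) : vsub (vsc c x) (vsc c y) = vsc c (vsub x y).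
Proof. apply functional_extensionality => a. unfold vsub, vsc. ceq. Qed.
Lemma vsc_vsc n c d (x : Vec n) : vsc c (vsc d x) = vsc (c * d) x.
Proof. apply functional_extensionality => a. unfold vsc. ceq. Qed.
Lemma vsc_one n (x : Vec n) : vsc 1 x = x.
Proof. apply functional_extensionality => a. unfold vsc. ceq. Qed.
Lemma N2_vsub0 n (x : Vec n) : N2 (vsub x (zeroVec n)) = N2 x.
Proof. unfold N2. apply Rsum_ext => a. unfold vsub, zeroVec, Cnorm2, Cminus, Cplus, Copp, C0; simpl; ring. Qed.
Lemma N2_zeroVec n : N2 (zeroVec n) = 0.
Proof. unfold N2. apply Rsum_eq0 => a. unfold zeroVec, Cnorm2, C0; simpl; ring. Qed.

Lemma phi_ge (phi : nat -> nat) : (forall k, (phi k < phi (S k))%nat) -> forall k, (k <= phi k)%nat.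
Proof.
  move=> H. elim => [|k IH] //. have := H k. move=> H1. exact: leq_ltn_trans IH H1.
Qed.

Lemma Kbound n (K : Pt n -> Prop) : compactPt K -> exists M, 0 <= M /\ forall z, K z -> N2 (snd z) <= M.
Proof.
  move=> HK. apply NNPP => Hn.
  have H1 : forall k : nat, exists z, K z /\ INR k < N2 (snd z).
  { move=> k. apply NNPP => H2. apply Hn. exists (INR k). split; [apply pos_INR|].
    move=> z Kz. apply Rnot_lt_le => H3. apply H2. by exists z. }
  pose u := fun k => proj1_sig (constructive_indefinite_description _ (H1 k)).
  have Hu : forall k, K (u k) /\ INR k < N2 (snd (u k)).
  { move=> k. exact: proj2_sig (constructive_indefinite_description _ (H1 k)). }
  have [phi [p [Hphi [Kp Hconv]]]] := HK u (fun k => proj1 (Hu k)).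
  have [N HN] := Hconv 1 Rlt_0_1.
  have [m Hm] := INR_archimed 1 (2 + 2 * N2 (snd p)) Rlt_0_1.
  set k := (N + m)%nat.
  have Hk := HN k (leq_addr m N).
  have Hk2 := proj2 (Hu (phi k)).
  have Hphik : (m <= phi k)%nat. { apply: leq_trans (phi_ge Hphi k). exact: leq_addl. }
  have HI : INR m <= INR (phi k) by apply le_INR; apply/leP.
  have T := N2_tri (snd (u (phi k))) (snd p) (zeroVec n).
  rewrite !N2_vsub0 in T.
  have D : N2 (vsub (snd (u (phi k))) (snd p)) <= dist2 (u (phi k)) p.
  { unfold dist2. have := Cnorm2_ge0 (Cminus (fst (u (phi k))) (fst p)). unfold N2, vsub. lra. }
  lra.
Qed.

Lemma pow_le_decr t i j : 0 < t < 1 -> (i <= j)%nat -> t ^ j <= t ^ i.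
Proof.
  move=> Ht. elim: j => [|j IH]. rewrite leqn0 => /eqP ->. lra.
  rewrite leq_eqVlt => /orP [/eqP -> | H]. lra.
  have := IH H. have := pow_lt t i (proj1 Ht). have := pow_lt t j (proj1 Ht). simpl. nra.
Qed.
Lemma pow_lt_decr t i j : 0 < t < 1 -> (i < j)%nat -> t ^ j < t ^ i.
Proof.
  move=> Ht H. have := @pow_le_decr t (S i) j Ht H. have := pow_lt t i (proj1 Ht). simpl. nra.
Qed.

Lemma entry_bound n (Th : Mat n) R : inU Th R -> forall a b, Rabs (Cre (R a b)) <= 1 /\ Rabs (Cim (R a b)) <= 1.
Proof.
  move=> [HU _] a b. have E := f_equal Cre (HU b b). rewrite Cre_sum in E.
  unfold kron in E. rewrite eqxx in E. simpl in E.
  have E2 : Rsum (fun k => Cnorm2 (R k b)) = 1.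
  { rewrite -E. apply Rsum_ext => k. unfold Cnorm2, Cmult, Cconj; simpl; ring. }
  have H := @Rsum_term n (fun k => Cnorm2 (R k b)) a (fun j => Cnorm2_ge0 _).
  rewrite E2 in H. unfold Cnorm2 in H.
  have := Rle_0_sqr (Cre (R a b)). have := Rle_0_sqr (Cim (R a b)). unfold Rsqr => H1 H2.
  split; apply Rabs_le; split; nra.
Qed.

Lemma Cnorm2_sum_le n (F : 'I_n -> C) : Cnorm2 (Csum F) <= 2 ^ n * Rsum (fun b => Cnorm2 (F b)).
Proof.
  unfold Csum, Rsum. elim: n F => [|n IH] F.
  - rewrite !big_ord0 /=. unfold Cnorm2, C0; simpl; lra.
  - rewrite !big_ord_recr /=.
    set S := \big[Cplus/C0]_(i < n) F (widen_ord (leqnSn n) i).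
    set S2 := \big[Rplus/0]_(i < n) Cnorm2 (F (widen_ord (leqnSn n) i)).
    have H := IH (fun i => F (widen_ord (leqnSn n) i)). fold S S2 in H.
    have H2 : Cnorm2 (Cplus S (F ord_max)) <= 2 * Cnorm2 S + 2 * Cnorm2 (F ord_max).
    { unfold Cnorm2, Cplus; simpl.
      have := Rle_0_sqr (Cre S - Cre (F ord_max)). have := Rle_0_sqr (Cim S - Cim (F ord_max)). unfold Rsqr. nra. }
    have := Cnorm2_ge0 (F ord_max). have := pow_le 2 n ltac:(lra).
    have : 1 <= 2 ^ n. { apply pow_R1_Rle. lra. } nra.
Qed.


Lemma close_bound n (R R' : Mat n) d :
  (forall a b, Rabs (Cre (R a b) - Cre (R' a b)) < d /\ Rabs (Cim (R a b) - Cim (R' a b)) < d) ->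
  forall x, N2 (vsub (Mv R x) (Mv R' x)) <= INR n * (2 ^ n * (2 * d * d * N2 x)).
Proof.
  move=> H x. unfold N2 at 1.
  rewrite -Rsum_const. apply Rsum_le => a.
  have E : vsub (Mv R x) (Mv R' x) a = Csum (fun b => Cmult (Cminus (R a b) (R' a b)) (x b)).
  { unfold vsub, Mv. rewrite -Csum_sub. apply Csum_ext => b. ceq. }
  rewrite E. eapply Rle_trans; [apply Cnorm2_sum_le|].
  apply Rmult_le_compat_l; [apply pow_le; lra|].
  unfold N2. rewrite -Rsum_scal. apply Rsum_le => b.
  have [H1 H2] := H a b. apply Rabs_def2 in H1. apply Rabs_def2 in H2.
  have := Cnorm2_ge0 (x b).
  have E2 : Cnorm2 (Cmult (Cminus (R a b) (R' a b)) (x b)) = Cnorm2 (Cminus (R a b) (R' a b)) * Cnorm2 (x b).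
  { unfold Cnorm2, Cmult, Cminus, Cplus, Copp; simpl; ring. }
  rewrite E2. have : Cnorm2 (Cminus (R a b) (R' a b)) <= 2 * d * d.
  { unfold Cnorm2, Cminus, Cplus, Copp; simpl. nra. }
  move=> H3 H4. nra.
Qed.

Lemma rot_bound n (Th : Mat n) (Ri Rj Ri' Rj' B : Mat n) a c (TY : Vec n -> Vec n) :
  inU Th Ri -> inU Th Rj -> inU Th Ri' -> inU Th Rj' -> inU Th B -> 0 < a ->
  (forall x, Mv Ri (Mv Ri' x) = x) -> (forall x, Mv Rj (Mv Rj' x) = x) ->
  (forall x, N2 (vsub (Mv Rj x) (Mv Ri x)) <= c * N2 x) ->
  (forall x, vsc (sqrt a) (Mv Ri (Mv B (Mv Ri' (TY x)))) = x) ->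
  forall z, N2 (vsub (vsc (sqrt a) (Mv Rj (Mv B (Mv Rj' (TY z))))) z) <= 4 * c * N2 z.
Proof.
  move=> Hi Hj Hi' Hj' HB Ha Ii Ij Hc HTY z.
  set u := TY z.
  have Ez : z = vsc (sqrt a) (Mv Ri (Mv B (Mv Ri' u))) by rewrite HTY.
  have Nz : N2 z = a * N2 u.
  { rewrite Ez N2_sc (norm_pres _ Hi) (norm_pres _ HB) (norm_pres _ Hi') sqrt_sqrt //; lra. }
  rewrite {1}Ez vsub_sc N2_sc sqrt_sqrt; last lra. rewrite Nz.
  have C1 : N2 (vsub (Mv Rj' u) (Mv Ri' u)) <= c * N2 u.
  { set x := Mv Rj' u.
    have -> : N2 (vsub x (Mv Ri' u)) = N2 (vsub (Mv Rj x) (Mv Ri x)).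
    { rewrite -(norm_pres _ Hi) Mv_sub Ii /x Ij N2_subC //. }
    rewrite -(norm_pres u Hj'). apply Hc. }
  set v := Mv B (Mv Rj' u).
  have T := N2_tri (Mv Rj v) (Mv Ri v) (Mv Ri (Mv B (Mv Ri' u))).
  have C2 : N2 (vsub (Mv Ri v) (Mv Ri (Mv B (Mv Ri' u)))) = N2 (vsub (Mv Rj' u) (Mv Ri' u)).
  { rewrite -Mv_sub (norm_pres _ Hi) /v -Mv_sub (norm_pres _ HB) //. }
  have C3 : N2 (vsub (Mv Rj v) (Mv Ri v)) <= c * N2 u.
  { have := Hc v. rewrite {3}/v (norm_pres _ HB) (norm_pres _ Hj'). done. }
  rewrite C2 in T. have F : N2 (vsub (Mv Rj v) (Mv Ri (Mv B (Mv Ri' u)))) <= 4 * c * N2 u by lra.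
  have -> : 4 * c * (a * N2 u) = a * (4 * c * N2 u) by ring.
  apply Rmult_le_compat_l; lra.
Qed.


Lemma Rabs_le_between x c : Rabs x <= c -> -c <= x <= c.
Proof. move=> H. have := Rle_abs x. have := Rle_abs (- x). rewrite Rabs_Ropp. lra. Qed.

Definition cidx (d x : R) : nat := Z.to_nat (up ((x + 1) / d)).
Definition Nc (d : R) : nat := Z.to_nat (up (2 / d)).

Lemma up_pos u : 0 <= u -> (0 < up u)%Z.
Proof. move=> H. have [H1 _] := archimed u. apply lt_IZR. simpl. lra. Qed.

Lemma cidx_close d x y : 0 < d -> -1 <= x -> -1 <= y -> cidx d x = cidx d y -> Rabs (x - y) < d.
Proof.
  move=> Hd Hx Hy. unfold cidx.
  set u := (x + 1) / d. set v := (y + 1) / d.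
  have Hu : 0 <= u by apply Rmult_le_pos; [lra| left; apply Rinv_0_lt_compat; lra].
  have Hv : 0 <= v by apply Rmult_le_pos; [lra| left; apply Rinv_0_lt_compat; lra].
  move=> E. have E' : up u = up v.
  { apply Z2Nat.inj; [have := up_pos Hu; lia| have := up_pos Hv; lia| exact E]. }
  have [A1 A2] := archimed u. have [B1 B2] := archimed v. rewrite E' in A1 A2.
  have Huv : Rabs (u - v) < 1 by apply Rabs_def1; lra.
  have Exy : x - y = d * (u - v) by unfold u, v; field; lra.
  rewrite Exy Rabs_mult (Rabs_pos_eq d); [|lra].
  have := Rabs_pos (u - v). nra.
Qed.

Lemma cidx_bound d x : 0 < d -> -1 <= x <= 1 -> (cidx d x <= Nc d)%N.
Proof.
  move=> Hd Hx. unfold cidx, Nc. apply/leP. apply Z2Nat.inj_le.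
  - have : 0 <= (x + 1) / d by apply Rmult_le_pos; [lra| left; apply Rinv_0_lt_compat; lra].
    move/up_pos. lia.
  - have : 0 <= 2 / d by apply Rmult_le_pos; [lra| left; apply Rinv_0_lt_compat; lra].
    move/up_pos. lia.
  - have [A1 A2] := archimed ((x + 1) / d). have [B1 B2] := archimed (2 / d).
    have : (x + 1) / d <= 2 / d.
    { apply Rmult_le_compat_r; [left; apply Rinv_0_lt_compat; lra| lra]. }
    move=> H. have : IZR (up ((x + 1) / d)) < IZR (up (2 / d)) + 1 by lra.
    rewrite -plus_IZR. move/lt_IZR. lia.
Qed.

Definition cellM n d (R : Mat n) : {ffun 'I_n * 'I_n * bool -> 'I_(Nc d).+1} :=
  [ffun p => inord (cidx d (if p.2 then Cre (R p.1.1 p.1.2) else Cim (R p.1.1 p.1.2)))].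

Lemma pigeon n (Rf : nat -> Mat n) d L : 0 < d ->
  (forall k a b, Rabs (Cre (Rf k a b)) <= 1 /\ Rabs (Cim (Rf k a b)) <= 1) ->
  exists i j, (L <= i)%N /\ (i < j)%N /\
    forall a b, Rabs (Cre (Rf j a b) - Cre (Rf i a b)) < d /\ Rabs (Cim (Rf j a b) - Cim (Rf i a b)) < d.
Proof.
  move=> Hd Hb.
  pose T := {ffun 'I_n * 'I_n * bool -> 'I_(Nc d).+1}.
  pose F := fun x : 'I_(#|T|.+1) => cellM d (Rf (L + x)%N).
  have Hni : ~~ injectiveb F.
  { apply/negP => /injectiveP Hinj. have := @leq_card _ _ F Hinj. by rewrite card_ord ltnn. }
  have [x [y Hxy HF]] := injectivePn _ Hni.
  have [i [j [Hi [Hij Hc]]]] : exists i j, (L <= i)%N /\ (i < j)%N /\ cellM d (Rf j) = cellM d (Rf i).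
  { case: (ltngtP x y) => H.
    - exists (L + x)%N, (L + y)%N. split; [exact: leq_addr| split; [by rewrite ltn_add2l| exact: (esym HF)]].
    - exists (L + y)%N, (L + x)%N. split; [exact: leq_addr| split; [by rewrite ltn_add2l| exact: HF]].
    - exfalso. move: Hxy. by rewrite (val_inj H) eqxx. }
  exists i, j. split; [done| split; [done|]]. move=> a b.
  have Bj := Hb j a b. have Bi := Hb i a b.
  have key : forall fl : bool, cidx d (if fl then Cre (Rf j a b) else Cim (Rf j a b)) =
                               cidx d (if fl then Cre (Rf i a b) else Cim (Rf i a b)).
  { move=> fl. have := congr1 (fun f : {ffun 'I_n * 'I_n * bool -> 'I_(Nc d).+1} => nat_of_ord (f (a, b, fl))) Hc. rewrite /= !ffunE /=.
    rewrite !inordK //; apply: cidx_bound => //; case: fl; apply Rabs_le_between; tauto. }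
  have K1 := key true. have K2 := key false. simpl in K1, K2.
  case: Bj => /Rabs_le_between Bj1 /Rabs_le_between Bj2.
  case: Bi => /Rabs_le_between Bi1 /Rabs_le_between Bi2.
  split; apply: cidx_close => //; lra.
Qed.


Lemma Rep_eq n (f : Pt n -> Pt n) a b T a' b' : Rep f a b T -> a = a' -> b = b' -> Rep f a' b' T.
Proof. move=> H E1 E2. by rewrite -E1 -E2. Qed.
Lemma GoodP_ext n (Th : Mat n) a T a' T' : GoodP Th a T -> a = a' -> (forall x, T x = T' x) -> GoodP Th a' T'.
Proof. move=> [H0 [R [HR HT]]] <- E. split; [done| exists R; split; [done|]]. move=> x. by rewrite -E. Qed.

Definition bPhi (t s : R) (k : nat) := s * (1 - t ^ k) / (1 - t).

Lemma pow_rep n (Th : Mat n) (G : (Pt n -> Pt n) -> Prop) phi t s A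
  (HG : isSubgroup Th G) (Hphi : G phi) (Ht : 0 < t < 1) (HA : inU Th A)
  (Hphinf : agreeOnH phi (nf Th t s (zeroVec n) A)) :
  forall k, exists F T, G F /\ Rep F (t ^ k) (bPhi t s k) T /\ GoodP Th (t ^ k) T.
Proof.
  have [_ [[e [He Hid]] _]] := HG.
  have Rphi : Rep phi t s (Tof t A).
  { move=> z Hz. rewrite -(nf_zero Th). exact: eqPt_eq (Hphinf z Hz). }
  have Gphi : GoodP Th t (Tof t A) by split; [lra| exists A; split].
  elim => [|k [F [T [HF [RF GF]]]]].
  - have [Re Ge] := id_rep HG Hphi Ht Hphinf He Hid.
    exists e, (fun x => x). split; [done| split].
    + refine (Rep_eq Re _ _); [done| unfold bPhi; simpl; field; lra].
    + done.
  - have [h [Hh [Rh Gh]]] := comp_rep HG Hphi Ht Hphinf Hphi Rphi Gphi HF RF GF.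
    exists h, (fun x => Tof t A (T x)). split; [done| split; [|done]].
    refine (Rep_eq Rh _ _); [done| unfold bPhi; simpl; field; lra].
Qed.

Definition bX (t s a b : R) (k : nat) := t ^ k * (a * (- bPhi t s k / t ^ k) + b) + bPhi t s k.
Definition TX n (a : R) (R B R' : Mat n) (u : Vec n) : Vec n := vsc (sqrt a) (Mv R (Mv B (Mv R' u))).

Lemma perk n (Th : Mat n) (G : (Pt n -> Pt n) -> Prop) phi t s A
  (HG : isSubgroup Th G) (Hphi : G phi) (Ht : 0 < t < 1) (HA : inU Th A)
  (Hphinf : agreeOnH phi (nf Th t s (zeroVec n) A))
  psi a b B (Hpsi : G psi) (Ha : 0 < a) (HB : inU Th B) (Rpsi : Rep psi a b (Tof a B)) :
  forall k, exists R : Mat n, exists (R' : Mat n) X Y TY,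
    inU Th R /\ inU Th R' /\ (forall x, Mv R (Mv R' x) = x) /\ G X /\ G Y /\
    Rep X a (bX t s a b k) (TX a R B R') /\ GoodP Th a (TX a R B R') /\
    Rep Y (/ a) (- bX t s a b k / a) TY /\ GoodP Th (/ a) TY /\
    (forall x, TX a R B R' (TY x) = x).
Proof.
  move=> k.
  have Gpsi : GoodP Th a (Tof a B) by split; [lra| exists B; split].
  have [F [TF [HF [RF GF]]]] := pow_rep HG Hphi Ht HA Hphinf k.
  have [Fi [TFi [HFi [RFi [GFi [I1 I2]]]]]] := inv_rep HG Hphi Ht Hphinf HF RF GF.
  have [P [HP [RP GP]]] := comp_rep HG Hphi Ht Hphinf Hpsi Rpsi Gpsi HFi RFi GFi.
  have [X [HX [RX GX]]] := comp_rep HG Hphi Ht Hphinf HF RF GF HP RP GP.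
  have Htk : 0 < t ^ k by apply pow_lt; lra.
  have [_ [R [HR ER]]] := GF. have [_ [R' [HR' ER']]] := GFi.
  have Esq : sqrt (t ^ k) * sqrt (/ t ^ k) = 1.
  { rewrite -sqrt_mult; [|lra| left; apply Rinv_0_lt_compat; lra]. rewrite Rinv_r; [exact sqrt_1| lra]. }
  have EI : forall x, Mv R (Mv R' x) = x.
  { move=> x. have := I1 x. rewrite ER ER'. unfold Tof. rewrite Mv_sc vsc_vsc Esq vsc_one. done. }
  have ET : forall u, TF (Tof a B (TFi u)) = TX a R B R' u.
  { move=> u. rewrite ER ER'. unfold Tof, TX. rewrite !Mv_sc !vsc_vsc. f_equal.
    rewrite (Rmult_comm (sqrt (t ^ k))) Rmult_assoc Esq. ring. }
  have Eal : t ^ k * (a * / t ^ k) = a by field; lra.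
  have RX' : Rep X a (bX t s a b k) (TX a R B R').
  { apply: Rep_Text ET. exact: (Rep_eq RX Eal erefl). }
  have GX' : GoodP Th a (TX a R B R') := GoodP_ext GX Eal ET.
  have [Y [TY [HY [RY [GY [J1 J2]]]]]] := inv_rep HG Hphi Ht Hphinf HX RX' GX'.
  exists R, R', X, Y, TY. done.
Qed.


Lemma dist_aff n be (T : Vec n -> Vec n) (z : Pt n) :
  dist2 (Aff 1 be T z) z = be * be + N2 (vsub (T (snd z)) (snd z)).
Proof.
  unfold dist2. f_equal. unfold Aff; simpl. unfold Cnorm2, Cminus, Cplus, Copp, Cmult, RtoC, Ci; simpl. ring.
Qed.

Lemma bX_eq t s a b k : 0 < t < 1 -> bX t s a b k = (1 - a) * s / (1 - t) + t ^ k * (b - (1 - a) * s / (1 - t)).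
Proof.
  move=> Ht. have : 0 < t ^ k by apply pow_lt; lra. move=> H.
  unfold bX, bPhi. field. lra.
Qed.

Lemma bpart n (Th : Mat n) (G : (Pt n -> Pt n) -> Prop) phi t s A
  (HG : isSubgroup Th G) (Hdisc : isDiscrete G) (Hphi : G phi) (Ht : 0 < t < 1) (HA : inU Th A)
  (Hphinf : agreeOnH phi (nf Th t s (zeroVec n) A))
  psi a b B (Hpsi : G psi) (Ha : 0 < a) (HB : inU Th B)
  (Hnf : agreeOnH psi (nf Th a b (zeroVec n) B)) :
  b * (1 - t) = s * (1 - a).
Proof.
  have Rpsi : Rep psi a b (Tof a B).
  { move=> z Hz. rewrite -(nf_zero Th). exact: eqPt_eq (Hnf z Hz). }
  set d := b - (1 - a) * s / (1 - t).
  suff Hd : d = 0.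
  { have : b = (1 - a) * s / (1 - t) by unfold d in Hd; lra. move=> ->. field. lra. }
  apply NNPP => Hd0.
  have [_ [[e [He Hid]] _]] := HG.
  have [K [eps [HK [HKH [Heps Hiso]]]]] := Hdisc e He.
  have [M [HM0 HM]] := Kbound HK.
  have PK := perk HG Hphi Ht HA Hphinf Hpsi Ha HB Rpsi.
  pose Rf := fun k => proj1_sig (constructive_indefinite_description _ (PK k)).
  have Hf : forall k, exists (R' : Mat n) X Y TY,
    inU Th (Rf k) /\ inU Th R' /\ (forall x, Mv (Rf k) (Mv R' x) = x) /\ G X /\ G Y /\
    Rep X a (bX t s a b k) (TX a (Rf k) B R') /\ GoodP Th a (TX a (Rf k) B R') /\
    Rep Y (/ a) (- bX t s a b k / a) TY /\ GoodP Th (/ a) TY /\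
    (forall x, TX a (Rf k) B R' (TY x) = x).
  { move=> k. exact: proj2_sig (constructive_indefinite_description _ (PK k)). }
  have Hbd : forall k a b, Rabs (Cre (Rf k a b)) <= 1 /\ Rabs (Cim (Rf k a b)) <= 1.
  { move=> k a0 b0. have [R' [X [Y [TY [HU _]]]]] := Hf k. exact: entry_bound HU a0 b0. }
  set cst := INR n * 2 ^ n * 2.
  have Hcst : 0 <= cst.
  { unfold cst. have := pos_INR n. have := pow_le 2 n ltac:(lra). nra. }
  set Kc := 4 * cst * (M + 1) + 1.
  have HKc : 1 <= Kc by unfold Kc; nra.
  set del := Rmin 1 (eps * eps / (4 * Kc)).
  have Hdel0 : 0 < del.
  { apply Rmin_pos; [lra|]. apply Rdiv_lt_0_compat; nra. }
  have Hdel1 : del <= 1 by apply Rmin_l.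
  have Hdel2 : del <= eps * eps / (4 * Kc) by apply Rmin_r.
  have Hdd : 0 < Rabs d by apply Rabs_pos_lt.
  have [N HN] := pow_lt_1_zero t (ltac:(rewrite Rabs_pos_eq; lra) : Rabs t < 1)
                    (eps / (2 * (Rabs d + 1))) ltac:(apply Rdiv_lt_0_compat; lra).
  have [i [j [Hi [Hij Hcl]]]] := @pigeon n Rf del N Hdel0 Hbd.
  have [Ri' [Xi [Yi [TYi [HRi [HRi' [Ii [HXi [HYi [RXi [GXi [RYi [GYi JYi]]]]]]]]]]]]] := Hf i.
  have [Rj' [Xj [Yj [TYj [HRj [HRj' [Ij [HXj [HYj [RXj [GXj [RYj [GYj JYj]]]]]]]]]]]]] := Hf j.
  have [h [Hh [Rh Gh]]] := comp_rep HG Hphi Ht Hphinf HXj RXj GXj HYi RYi GYi.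
  set bh := a * (- bX t s a b i / a) + bX t s a b j.
  have Ebh : bh = (t ^ j - t ^ i) * d.
  { unfold bh. rewrite !bX_eq //. unfold d. field. lra. }
  have Rh1 : Rep h 1 bh (fun x => TX a (Rf j) B Rj' (TYi x)).
  { refine (Rep_eq Rh _ _); [field; lra| done]. }
  have Hc : forall x, N2 (vsub (Mv (Rf j) x) (Mv (Rf i) x)) <= (cst * del * del) * N2 x.
  { move=> x. have := close_bound Hcl x. unfold cst. move=> H. nra. }
  have HB' := HB.
  have Hrot := rot_bound HRi HRj HRi' HRj' HB Ha Ii Ij Hc JYi.
  have Hti : t ^ i <= t ^ N by apply pow_le_decr; [lra| exact Hi].
  have HtN : Rabs (t ^ N) < eps / (2 * (Rabs d + 1)) by apply HN; apply/leP; exact: leqnn.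
  have Htj : t ^ j < t ^ i by apply pow_lt_decr.
  have Htj0 : 0 < t ^ j by apply pow_lt; lra.
  rewrite Rabs_pos_eq in HtN; last by (left; apply pow_lt; lra).
  have Hbh : bh * bh < eps * eps / 2.
  { rewrite Ebh.
    have E1 : 0 <= t ^ i - t ^ j by lra.
    have E2 : (t ^ i - t ^ j) * Rabs d < eps / 2.
    { have : t ^ N * (2 * (Rabs d + 1)) < eps.
      { have H2 : 0 < 2 * (Rabs d + 1) by lra.
        have := Rmult_lt_compat_r _ _ _ H2 HtN. unfold Rdiv. rewrite Rmult_assoc Rinv_l; lra. }
      have : (t ^ i - t ^ j) <= t ^ N by lra. nra. }
    have E3 : ((t ^ j - t ^ i) * d) * ((t ^ j - t ^ i) * d) = ((t ^ i - t ^ j) * Rabs d) * ((t ^ i - t ^ j) * Rabs d).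
    { have Hd2 : d * d = Rabs d * Rabs d by rewrite -Rabs_mult Rabs_pos_eq; [done| nra].
      have -> : ((t ^ j - t ^ i) * d) * ((t ^ j - t ^ i) * d) = (t ^ i - t ^ j) * (t ^ i - t ^ j) * (d * d) by ring.
      rewrite Hd2. ring. }
    rewrite E3. have : 0 <= (t ^ i - t ^ j) * Rabs d by have := Rabs_pos d; nra. nra. }
  have Hclose : forall z, K z -> dist2 (h z) (e z) < eps * eps.
  { move=> z Kz. have Hz := HKH z Kz.
    rewrite (eqPt_eq (Hid z Hz)) Rh1 // dist_aff.
    have H1 := Hrot (snd z). unfold TX in H1 |- *.
    have H2 := HM z Kz.
    have H3 : 4 * (cst * del * del) * N2 (snd z) <= eps * eps / 4.
    { have : cst * del * del <= cst * del by have := Rmult_le_compat_l _ _ _ Hcst (Rmult_le_compat_l _ _ _ (Rlt_le _ _ Hdel0) Hdel1); lra.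
      have := N2_ge0 (snd z). move=> H4 H5.
      have : 4 * (cst * del * del) * N2 (snd z) <= 4 * (cst * del) * (M + 1).
      { have : 0 <= cst * del * del by nra. nra. }
      have : 4 * (cst * del) * (M + 1) <= Kc * del by unfold Kc; nra.
      have : Kc * del <= Kc * (eps * eps / (4 * Kc)) by apply Rmult_le_compat_l; lra.
      have : Kc * (eps * eps / (4 * Kc)) = eps * eps / 4 by field; lra.
      lra. }
    have : 0 < eps * eps by nra. lra. }
  have Hag := Hiso h Hh Hclose.
  set zs : Pt n := (RtoC (-1), zeroVec n).
  have Hzs : inH zs by apply inH_pt; rewrite N2_zeroVec; lra.
  have E := Hag zs Hzs. have [E1 _] := E.
  rewrite (eqPt_eq (Hid zs Hzs)) (Rh1 zs Hzs) in E1.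
  have := f_equal Cim E1. unfold Aff, zs; simpl. move=> Hb0.
  have Hb : bh = 0 by lra.
  rewrite Ebh in Hb. apply Rmult_integral in Hb. case: Hb => Hb; [lra| done].
Qed.


Unset Implicit Arguments.
Set Strict Implicit.

Theorem mainTheorem3 (n : nat) (Th : Mat n) (G : (Pt n -> Pt n) -> Prop)
  (Hn : (1 <= n)%nat) (Hskew : skew Th) (Hnz : nonzero_mat Th)
  (HG : isSubgroup Th G) (Hdisc : isDiscrete G)
  (phi : Pt n -> Pt n) (t s : R) (A : Mat n)
  (Hphi : G phi) (Ht : 0 < t < 1) (HA : inU Th A)
  (Hphinf : agreeOnH phi (nf Th t s (zeroVec n) A)) :
  forall psi, G psi ->
    exists (a b : R) (B : Mat n),
      0 < a /\ inU Th B /\ agreeOnH psi (nf Th a b (zeroVec n) B) /\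
      b * (1 - t) = s * (1 - a) /\
      (a <> 1 -> b / (1 - a) = s / (1 - t)).
Proof.
  move=> psi Hpsi.
  have [a [b [B [Ha [HB Hnf]]]]] := w0 HG Hphi Ht Hphinf Hpsi.
  have Hb := bpart HG Hdisc Hphi Ht HA Hphinf Hpsi Ha HB Hnf.
  exists a, b, B. split; [done| split; [done| split; [done| split; [done|]]]].
  move=> Ha1. have H1 : 1 - a <> 0 by lra. have H2 : 1 - t <> 0 by lra.
  field_simplify_eq; try lra.
Qed.
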